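(* Let $T$ be a decomposition tree of a distance-hereditary graph $G$ and let $v$ be an internal node of $T$. Suppose that (1) $\hat\gamma_0(v)=\hat{min}(v)+\hat\alpha(v)$; (2) $\hat\gamma_{|\hat{TS}(v)|}(v)=\hat{min}(v)+|\hat{TS}(v)|-\hat\beta(v)$; and (3) $\hat\gamma_{\hat\alpha(v)+2i}(v)=\hat{min}(v)$ for all integers $0\le i\le(\hat\beta(v)-\hat\alpha(v))/2$. Then for every integer $0\le k\le|\hat{TS}(v)|$, $$\hat\gamma_k(v)=\begin{cases}\hat{min}(v)+\hat\alpha(v)-k & \text{if } 0\le k\le\hat\alpha(v),\\ \hat{min}(v)+k-\hat\beta(v) & \text{if } \hat\beta(v)\le k\le|\hat{TS}(v)|,\\ \hat{min}(v) & \text{if } \hat\alpha(v)<k<\hat\beta(v)\text{ and } k-\hat\alpha(v)\text{ is even},\\ \hat{min}(v)+1 & \text{otherwise.}\end{cases}$$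
   Context: All graphs are finite, simple, undirected. For a graph $H$ and $S\subseteq V(H)$, $N_H[S]$ is $S$ together with all vertices adjacent to a vertex of $S$, and $H[S]$ is the induced subgraph. Graphs carry a ''twin set'': a single-vertex graph on $x$ has twin set $\{x\}$. For vertex-disjoint graphs $G_l,G_r$ with twin sets $TS(G_l),TS(G_r)$: the true twin operation $G_l\otimes G_r$ has vertex set $V(G_l)\cup V(G_r)$, edge set $E(G_l)\cup E(G_r)\cup\{uw: u\in TS(G_l), w\in TS(G_r)\}$ and twin set $TS(G_l)\cup TS(G_r)$; the false twin operation $G_l\odot G_r$ has vertex set $V(G_l)\cup V(G_r)$, edge set $E(G_l)\cup E(G_r)$, twin set $TS(G_l)\cup TS(G_r)$; the attachment operation $G_l\oplus G_r$ has the same vertex and edge sets as $G_l\otimes G_r$ and twin set $TS(G_l)$. A decomposition tree $T$ of $G$ is a rooted binary tree whose leaves are in bijection with $V(G)$, each internal node having a left and a right child and a label in $\{\otimes,\odot,\oplus\}$; for each node $v$ define $\hat G(v)$ and $\hat{TS}(v)$ recursively: for a leaf $x$, the single-vertex graph on $x$ with twin set $\{x\}$; for an internal node $v$ with label $\circ$ and children $v_l,v_r$, $\hat G(v)=\hat G(v_l)\circ\hat G(v_r)$ with the corresponding twin set; one requires $\hat G(\text{root})=G$. Then $\hat G(v)$ is the subgraph of $G$ induced by the set $\hat V(v)$ of leaves below $v$. For a node $v$ and $0\le k\le|\hat{TS}(v)|$, call $S\subseteq\hat V(v)$ $k$-feasible if $\hat V(v)\setminus\hat{TS}(v)\subseteq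 N_{\hat G(v)}[S]$ and there is $X\subseteq S\cap\hat{TS}(v)$ with $|X|=k$ such that $\hat G(v)[S\setminus X]$ has a perfect matching. $\hat\gamma_k(v)$ is the minimum size of a $k$-feasible set. $\hat{min}(v)=\min\{\hat\gamma_k(v):0\le k\le|\hat{TS}(v)|\}$, and $\hat\alpha(v)$, $\hat\beta(v)$ are the smallest and the largest $k$ with $\hat\gamma_k(v)=\hat{min}(v)$. *)

(* Defs.v *)
From mathcomp Require Import all_boot.
Set Implicit Arguments. Unset Strict Implicit. Unset Printing Implicit Defensive.

Inductive dop := TrueTwin | FalseTwin | Attach.

Inductive dtree (V : Type) :=
  | DLeaf of V
  | DNode of dop & dtree V & dtree V.
Arguments DLeaf {V} _.
Arguments DNode {V} _ _ _.

Section DT.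
Variable V : finType.

Fixpoint dleaves (t : dtree V) : seq V :=
  match t with
  | DLeaf x => [:: x]
  | DNode _ l r => dleaves l ++ dleaves r
  end.

Definition dV (t : dtree V) : {set V} := [set x in dleaves t].

Fixpoint dTS (t : dtree V) : {set V} :=
  match t with
  | DLeaf x => [set x]
  | DNode TrueTwin l r => dTS l :|: dTS r
  | DNode FalseTwin l r => dTS l :|: dTS r
  | DNode Attach l r => dTS l
  end.

Fixpoint dedge (t : dtree V) : rel V :=
  match t with
  | DLeaf _ => fun _ _ => false
  | DNode FalseTwin l r => fun x y => dedge l x y || dedge r x y
  | DNode _ l r => fun x y =>
      [|| dedge l x y, dedge r x y,
          (x \in dTS l) && (y \in dTS r) | (y \in dTS l) && (x \in dTS r)]
  end.

Fixpoint subtree (v T : dtree V) : Prop :=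
  v = T \/ match T with
           | DLeaf _ => False
           | DNode _ l r => subtree v l \/ subtree v r
           end.

Definition is_internal (v : dtree V) : bool :=
  if v is DNode _ _ _ then true else false.

Definition decomposition_tree (g : rel V) (T : dtree V) : Prop :=
  [/\ uniq (dleaves T), (forall x, x \in dleaves T) & (forall x y, dedge T x y = g x y)].

Definition simple_graph (g : rel V) : Prop := symmetric g /\ irreflexive g.

Definition walk_in (g : rel V) (S : {set V}) (u w : V) (p : seq V) : bool :=
  [&& u \in S, path g u p, last u p == w & all (fun x => x \in S) p].

(* distance-hereditary: every connected induced subgraph is isometric *)
Definition distance_hereditary (g : rel V) : Prop :=
  forall S : {set V},
    (forall u w, u \in S -> w \in S -> exists p, walk_in g S u w p) ->
    forall u w p, walk_in g setT u w p ->
      u \in S -> w \in S -> exists q, walk_in g S u w q /\ size q <= size p.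

Definition perfect_matching (e : rel V) (A : {set V}) : bool :=
  [exists M : {set {set V}},
     [forall m in M, [exists x, [exists y,
        [&& x \in A, y \in A, x != y, e x y & m == [set x; y]]]]]
     && [forall x in A, #|[set m in M | x \in m]| == 1]].

Definition feasible (t : dtree V) (k : nat) (S : {set V}) : bool :=
  [&& S \subset dV t,
      [forall u in dV t :\: dTS t, (u \in S) || [exists w in S, dedge t w u]] &
      [exists X : {set V},
         [&& X \subset S :&: dTS t, #|X| == k & perfect_matching (dedge t) (S :\: X)]]].

(* \hat\gamma_k(v); the default #|V|.+1 is never reached for k <= |TS| since
   k-feasible sets always exist. *)
Definition gamma (t : dtree V) (k : nat) : nat :=
  \big[minn/#|V|.+1]_(S : {set V} | feasible t k S) #|S|.

Definition gmin (t : dtree V) : nat :=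
  \big[minn/#|V|.+1]_(k < #|dTS t|.+1) gamma t k.

Definition galpha (t : dtree V) : nat :=
  \big[minn/#|dTS t|.+1]_(k < #|dTS t|.+1 | gamma t k == gmin t) (k : nat).

Definition gbeta (t : dtree V) : nat :=
  \max_(k < #|dTS t|.+1 | gamma t k == gmin t) (k : nat).

End DT.

(* Main.v *)
Require Import Defs.
From mathcomp Require Import all_boot zify.
Set Implicit Arguments. Unset Strict Implicit. Unset Printing Implicit Defensive.

Section Tree.
Variable V : finType.
Implicit Types (t l r : dtree V).

Lemma in_dV t x : (x \in dV t) = (x \in dleaves t).
Proof. by rewrite /dV inE. Qed.

Lemma dTS_sub t : dTS t \subset dV t.
Proof.
elim: t => [x|o l IHl r IHr]; first by rewrite /dV /= sub1set inE mem_seq1.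
apply/subsetP=> x; rewrite in_dV /= mem_cat.
have Hl : x \in dTS l -> x \in dleaves l by rewrite -in_dV; apply: (subsetP IHl).
have Hr : x \in dTS r -> x \in dleaves r by rewrite -in_dV; apply: (subsetP IHr).
case: o => /=; rewrite ?inE.
- by case/orP=> [/Hl|/Hr] H; rewrite H ?orbT.
- by case/orP=> [/Hl|/Hr] H; rewrite H ?orbT.
- by move/Hl => ->.
Qed.

Lemma dTS_n0 t : exists x, x \in dTS t.
Proof.
elim: t => [x|o l [y Hl] r [z Hr]]; first by exists x; rewrite inE.
by case: o => /=; [exists y; rewrite inE Hl|exists y; rewrite inE Hl|exists y].
Qed.

Lemma dedge_sym t x y : dedge t x y = dedge t y x.
Proof.
elim: t => [z|o l IHl r IHr] //.
case: o => /=; rewrite IHl IHr //;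
by case: (x \in dTS l); case: (y \in dTS l); case: (x \in dTS r); case: (y \in dTS r);
  rewrite /= ?orbT ?orbF.
Qed.

Lemma dedge_in t x y : dedge t x y -> (x \in dV t) && (y \in dV t).
Proof.
elim: t => [z|o l IHl r IHr] //.
rewrite !in_dV /= !mem_cat -!(in_dV l) -!(in_dV r).
have Sl := subsetP (dTS_sub l); have Sr := subsetP (dTS_sub r).
have A1 : dedge l x y -> ((x \in dV l) || (x \in dV r)) && ((y \in dV l) || (y \in dV r)).
  by case/IHl/andP=> a b; rewrite a b.
have A2 : dedge r x y -> ((x \in dV l) || (x \in dV r)) && ((y \in dV l) || (y \in dV r)).
  by case/IHr/andP=> a b; rewrite a b !orbT.
have A3 : (x \in dTS l) && (y \in dTS r) -> ((x \in dV l) || (x \in dV r)) && ((y \in dV l) || (y \in dV r)).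
  by case/andP=> /Sl a /Sr b; rewrite a b !orbT.
have A4 : (y \in dTS l) && (x \in dTS r) -> ((x \in dV l) || (x \in dV r)) && ((y \in dV l) || (y \in dV r)).
  by case/andP=> /Sl a /Sr b; rewrite a b !orbT.
by case: o => /=; [case/or4P|case/orP|case/or4P].
Qed.

Lemma nonisol t u : u \in dV t -> u \notin dTS t -> exists w, dedge t u w.
Proof.
elim: t => [z|o l IHl r IHr]; first by rewrite in_dV /= mem_seq1 inE => ->.
move=> uV0; have : (u \in dV l) || (u \in dV r) by move: uV0; rewrite !in_dV /= mem_cat.
move=> {uV0}.
case: o => /=; rewrite ?in_setU ?negb_or.
- case/orP=> uV /andP[ul ur].
  + by have [w H] := IHl uV ul; exists w; rewrite H.
  + by have [w H] := IHr uV ur; exists w; rewrite H orbT.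
- case/orP=> uV /andP[ul ur].
  + by have [w H] := IHl uV ul; exists w; rewrite H.
  + by have [w H] := IHr uV ur; exists w; rewrite H orbT.
- case/orP=> uV ul.
  + by have [w H] := IHl uV ul; exists w; rewrite H.
  + case: (boolP (u \in dTS r)) => ur.
    * have [w wl] := dTS_n0 l; exists w => /=; by rewrite wl !orbT.
    * by have [w H] := IHr uV ur; exists w; rewrite H orbT.
Qed.

Lemma dedge_irr t u : uniq (dleaves t) -> dedge t u u = false.
Proof.
elim: t => [z|o l IHl r IHr] //=.
rewrite cat_uniq => /and3P[ul hlr ur].
have Sl := subsetP (dTS_sub l); have Sr := subsetP (dTS_sub r).
have D : (u \in dTS l) && (u \in dTS r) = false.
  apply/negbTE/negP=> /andP[/Sl a /Sr b]; move: hlr; rewrite in_dV in a; rewrite in_dV in b.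
  by case/negP; apply/hasP; exists u.
by case: o => /=; rewrite IHl // IHr // D.
Qed.

Lemma subtree_uniq (v T : dtree V) : subtree v T -> uniq (dleaves T) -> uniq (dleaves v).
Proof.
elim: T => [z|o l IHl r IHr] /=; first by case=> // ->.
case=> [->//|]; rewrite cat_uniq => [[/IHl H|/IHr H]] /and3P[? ? ?]; by apply: H.
Qed.
End Tree.

Section Match.
Variable V : finType.
Variable e : rel V.
Implicit Types (A : {set V}) (M : {set {set V}}).

Definition PM1 A (M : {set {set V}}) :=
  forall m, m \in M -> exists x y, [/\ x \in A, y \in A, x != y, e x y & m = [set x; y]].
Definition PM2 A (M : {set {set V}}) :=
  forall x, x \in A -> #|[set m in M | x \in m]| = 1.

Lemma pmP A : reflect (exists M, PM1 A M /\ PM2 A M) (perfect_matching e A).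
Proof.
apply: (iffP existsP) => [[M /andP[/forall_inP H1 /forall_inP H2]]|[M [H1 H2]]].
  exists M; split.
    move=> m /H1 /existsP[x /existsP[y /and5P[xA yA xy exy /eqP me]]].
    by exists x, y.
  by move=> x /H2 /eqP.
exists M; apply/andP; split; apply/forall_inP.
  move=> m /H1 [x [y [xA yA xy exy me]]]; apply/existsP; exists x; apply/existsP; exists y.
  by rewrite xA yA xy exy me eqxx.
by move=> x /H2 ->.
Qed.

Lemma pm_uniq A M z m1 m2 : PM2 A M -> z \in A -> m1 \in M -> z \in m1 ->
  m2 \in M -> z \in m2 -> m1 = m2.
Proof.
move=> H2 zA m1M zm1 m2M zm2.
have /eqP/cards1P[m0 E] := H2 z zA.
have : m1 \in [set m in M | z \in m] by rewrite inE m1M zm1.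
have : m2 \in [set m in M | z \in m] by rewrite inE m2M zm2.
by rewrite E !inE => /eqP -> /eqP ->.
Qed.

Lemma pm_set0 : perfect_matching e set0.
Proof. by apply/pmP; exists set0; split => [m|x]; rewrite inE. Qed.

Lemma pm_add A u w : perfect_matching e A -> u \notin A -> w \notin A -> u != w -> e u w ->
  perfect_matching e (A :|: [set u; w]).
Proof.
move=> /pmP[M [H1 H2]] uA wA uw euw.
apply/pmP; exists ([set u; w] |: M); split.
  move=> m; rewrite in_setU1 => /orP[/eqP ->|/H1 [x [y [xA yA xy exy me]]]].
    by exists u, w; rewrite !inE !eqxx !orbT.
  by exists x, y; rewrite !inE xA yA.
move=> z; rewrite inE => /orP[zA|zuw].
  rewrite -(H2 z zA); apply: eq_card => m; rewrite !inE.
  case: (eqVneq m [set u; w]) => [->|] //=.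
  have -> : (z \in [set u; w]) = false.
    rewrite !inE; apply/negbTE/negP=> /orP[/eqP zu|/eqP zw].
      by move: uA; rewrite -zu zA.
    by move: wA; rewrite -zw zA.
  by rewrite andbF.
have -> : [set m in [set u; w] |: M | z \in m] = [set [set u; w]].
  apply/setP=> m; rewrite !inE.
  case: (eqVneq m [set u; w]) => [->|mne] /=; first by rewrite zuw.
  apply/negbTE/negP=> /andP[/H1 [x [y [xA yA _ _ me]]]].
  rewrite me !inE => /orP[/eqP zx|/eqP zy].
    by move: zuw; rewrite !inE => /orP[/eqP zu|/eqP zw]; [move: uA|move: wA];
       rewrite -?zu -?zw zx xA.
  by move: zuw; rewrite !inE => /orP[/eqP zu|/eqP zw]; [move: uA|move: wA];
       rewrite -?zu -?zw zy yA.
by rewrite cards1.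
Qed.

Lemma pm_rem A t : perfect_matching e A -> t \in A ->
  exists p, [/\ p \in A, p != t, e t p || e p t & perfect_matching e (A :\: [set t; p])].
Proof.
move=> /pmP[M [H1 H2]] tA.
have /eqP/cards1P[m0 E] := H2 t tA.
have : m0 \in [set m in M | t \in m] by rewrite E inE.
rewrite inE => /andP[m0M tm0].
have [x [y [xA yA xy exy me]]] := H1 _ m0M.
have [p [pA pt etp mE]] : exists p, [/\ p \in A, p != t, e t p || e p t & m0 = [set t; p]].
  move: tm0; rewrite me !inE => /orP[/eqP tx|/eqP ty]; subst t.
    by exists y; rewrite yA eq_sym xy exy; split.
  exists x; rewrite xA xy exy orbT; split => //; by rewrite setUC.
exists p; split => //.
have Hp : forall m, m \in M -> p \in m -> m = m0.
  move=> m mM pm; apply: (pm_uniq H2 pA mM pm m0M); by rewrite mE !inE eqxx orbT.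
have Ht : forall m, m \in M -> t \in m -> m = m0.
  move=> m mM pm; apply: (pm_uniq H2 tA mM pm m0M tm0).
apply/pmP; exists (M :\ m0); split.
  move=> m; rewrite !inE => /andP[mm0 mM].
  have [x' [y' [xA' yA' xy' exy' me']]] := H1 _ mM.
  have nz : forall z, z \in m -> (z != t) && (z != p).
    move=> z zm; apply/andP; split; apply/eqP=> ez; rewrite ez in zm.
      by move: mm0; rewrite (Ht m mM zm) eqxx.
    by move: mm0; rewrite (Hp m mM zm) eqxx.
  exists x', y'; split => //; rewrite !inE negb_or ?xA' ?yA' andbT; apply: nz;
    by rewrite me' !inE eqxx ?orbT.
move=> z; rewrite !inE negb_or => /andP[/andP[zt zp] zA].
rewrite -(H2 z zA); apply: eq_card => m; rewrite !inE.
case: (eqVneq m m0) => [->|] //=.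
by rewrite mE !inE (negbTE zt) (negbTE zp) andbF.
Qed.

Lemma pm_even A : perfect_matching e A -> ~~ odd #|A|.
Proof.
have [n ltAn] := ubnP #|A|; elim: n A ltAn => // n IHn A ltAn pmA.
case: (set_0Vmem A) => [->|[t tA]]; first by rewrite cards0.
have [p [pA pt _ pm']] := pm_rem pmA tA.
have sub : [set t; p] \subset A by rewrite subUset !sub1set tA pA.
rewrite -(cardsID [set t; p] A) (setIidPr sub) cards2 eq_sym pt oddD /=.
apply: IHn => //.
move: ltAn; rewrite -(cardsID [set t; p] A) (setIidPr sub) cards2 eq_sym pt /=.
lia.
Qed.
End Match.

Section Feas.
Variable V : finType.
Variable t : dtree V.
Implicit Types (S X : {set V}).

Definition Dom S := forall u, u \in dV t -> u \notin dTS t -> u \notin S ->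
  exists2 w, w \in S & dedge t w u.

Lemma feasible_intro k S X : S \subset dV t -> Dom S -> X \subset S -> X \subset dTS t ->
  #|X| = k -> perfect_matching (dedge t) (S :\: X) -> feasible t k S.
Proof.
move=> SV D XS XT Xk pm; rewrite /feasible SV /=; apply/andP; split.
  apply/forall_inP => u; rewrite inE => /andP[uT uV].
  case: (boolP (u \in S)) => //= uS; apply/exists_inP; exact: D.
by apply/existsP; exists X; rewrite subsetI XS XT Xk eqxx.
Qed.

Lemma feasible_elim k S : feasible t k S ->
  [/\ S \subset dV t, Dom S & exists X, [/\ X \subset S, X \subset dTS t, #|X| = k &
     perfect_matching (dedge t) (S :\: X)]].
Proof.
case/and3P=> SV /forall_inP D /existsP[X /and3P[]]; rewrite subsetI => /andP[XS XT] /eqP Xk pm.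
split => //; last by exists X.
move=> u uV uT uS; have := D u; rewrite inE uT uV (negbTE uS) /= => /(_ isT) /exists_inP.
done.
Qed.

Lemma feas_par k S : feasible t k S -> odd #|S| = odd k.
Proof.
case/feasible_elim=> _ _ [X [XS _ Xk pm]].
rewrite -(cardsID X S) (setIidPr XS) Xk oddD.
by rewrite (negbTE (pm_even pm)) addbF.
Qed.

Lemma feas_up k S : feasible t k S -> k < #|dTS t| ->
  exists2 S', feasible t k.+1 S' & #|S'| <= #|S|.+1.
Proof.
case/feasible_elim => SV D [X [XS XT Xk pm]] klt.
have TV := subsetP (dTS_sub t).
case: (boolP (dTS t \subset S)) => [TSS | /subsetPn [t0 t0T t0S]]; last first.
  have t0X : t0 \notin X by apply: contra t0S; apply: (subsetP XS).
  exists (t0 |: S); last by rewrite cardsU1 t0S.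
  apply: (@feasible_intro _ _ (t0 |: X)).
  - by rewrite subUset sub1set TV.
  - move=> u uV uT; rewrite in_setU1 negb_or => /andP[_ uS].
    by have [w wS ew] := D u uV uT uS; exists w; rewrite // in_setU1 wS orbT.
  - exact: setUS.
  - by rewrite subUset sub1set t0T.
  - by rewrite cardsU1 t0X Xk.
  - have -> : (t0 |: S) :\: (t0 |: X) = S :\: X.
      apply/setP=> x; rewrite !inE; case: (eqVneq x t0) => [->|] //=.
      by rewrite (negbTE t0S) andbF.
    done.
have /subsetPn [t1 t1T t1X] : ~~ (dTS t \subset X).
  apply/negP=> /subset_leq_card; rewrite Xk; lia.
have t1S : t1 \in S := subsetP TSS _ t1T.
have t1A : t1 \in S :\: X by rewrite inE t1X.
have [p [pA pt etp pm']] := pm_rem pm t1A.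
have etp' : dedge t t1 p by case/orP: etp => //; rewrite dedge_sym.
move: pA; rewrite inE => /andP[pX pS].
case: (boolP [exists q, dedge t p q && (q \notin S)]).
  case/existsP=> q /andP[epq qS].
  have qV : q \in dV t by case/andP: (dedge_in epq).
  have qt1 : (q == t1) = false by apply/negbTE; apply: contra qS => /eqP ->.
  have qX : (q \in X) = false by apply/negbTE; apply: contra qS; apply: (subsetP XS).
  have qp : (q == p) = false by apply/negbTE; apply: contra qS => /eqP ->.
  exists (q |: S); last by rewrite cardsU1 qS.
  apply: (@feasible_intro _ _ (t1 |: X)).
  - by rewrite subUset sub1set qV.
  - move=> u uV uT; rewrite in_setU1 negb_or => /andP[_ uS].
    by have [w wS ew] := D u uV uT uS; exists w; rewrite // in_setU1 wS orbT.
  - by rewrite subUset sub1set in_setU1 t1S orbT subsetU // XS orbT.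
  - by rewrite subUset sub1set t1T.
  - by rewrite cardsU1 t1X Xk.
  - have -> : (q |: S) :\: (t1 |: X) = (S :\: X :\: [set t1; p]) :|: [set p; q].
      apply/setP=> x; rewrite !inE; case: (eqVneq x q) => [->|xq].
        by rewrite qt1 qX /= !orbT.
      rewrite orbF /=; case: (eqVneq x p) => [->|xp] /=.
        by rewrite orbT (negbTE pt) (negbTE pX) pS.
      by case: (x == t1); case: (x \in X); case: (x \in S).
    apply: pm_add => //.
    + by rewrite !inE eqxx orbT.
    + by rewrite !inE (negbTE qS) !andbF.
    + by rewrite eq_sym qp.
move/existsPn => Nq.
have Nq' : forall q, dedge t p q -> q \in S.
  by move=> q epq; have := Nq q; rewrite epq /= negbK.
have t1p : t1 != p by rewrite eq_sym.
exists (S :\ p); last by apply: leqW; apply: subset_leq_card; apply: subsetDl.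
apply: (@feasible_intro _ _ (t1 |: X)).
- exact: (subset_trans (subsetDl _ _) SV).
- move=> u uV uT; rewrite !inE negb_and negbK => /orP[/eqP up|uS].
    by exists t1; [rewrite !inE t1p t1S | rewrite up].
  have [w wS ew] := D u uV uT uS; exists w => //.
  rewrite !inE wS andbT; apply/eqP => wp; rewrite wp in ew.
  by move: uS; rewrite Nq'.
- rewrite subUset sub1set !inE t1p t1S /=.
  apply/subsetP=> x xX; rewrite !inE (subsetP XS _ xX) andbT.
  by apply/eqP=> xp; move: pX; rewrite -xp xX.
- by rewrite subUset sub1set t1T.
- by rewrite cardsU1 t1X Xk.
- have -> : (S :\ p) :\: (t1 |: X) = S :\: X :\: [set t1; p].
    apply/setP=> x; rewrite !inE.
    by case: (x == t1); case: (x == p); case: (x \in X); case: (x \in S).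
  done.
Qed.

Lemma feas_down k S : feasible t k.+1 S ->
  exists2 S', feasible t k S' & #|S'| <= #|S|.+1.
Proof.
case/feasible_elim => SV D [X [XS XT Xk pm]].
have [x xX] : exists x, x \in X.
  by apply/set0Pn; rewrite -card_gt0 Xk.
have xS := subsetP XS _ xX; have xT := subsetP XT _ xX.
have Xk' : #|X :\ x| = k by move: Xk; rewrite (cardsD1 x X) xX; case.
case: (boolP [exists q, dedge t x q && (q \notin S)]).
  case/existsP=> q /andP[exq qS].
  have qV : q \in dV t by case/andP: (dedge_in exq).
  have qX : (q \in X) = false by apply/negbTE; apply: contra qS; apply: (subsetP XS).
  have qx : (q == x) = false by apply/negbTE; apply: contra qS => /eqP ->.
  exists (q |: S); last by rewrite cardsU1 qS.
  apply: (@feasible_intro _ _ (X :\ x)).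
  - by rewrite subUset sub1set qV.
  - move=> u uV uT; rewrite in_setU1 negb_or => /andP[_ uS].
    by have [w wS ew] := D u uV uT uS; exists w; rewrite // in_setU1 wS orbT.
  - by apply: subset_trans (subsetDl _ _) _; rewrite subsetU // XS orbT.
  - by apply: subset_trans (subsetDl _ _) _.
  - done.
  - have -> : (q |: S) :\: (X :\ x) = (S :\: X) :|: [set x; q].
      apply/setP=> y; rewrite !inE; case: (eqVneq y q) => [->|yq].
        by rewrite qx qX !orbT.
      rewrite orbF /=; case: (eqVneq y x) => [->|yx] /=.
        by rewrite xS xX orbT.
      by rewrite orbF andbC.
    apply: pm_add => //.
    + by rewrite !inE xX.
    + by rewrite !inE qX (negbTE qS).
    + by rewrite eq_sym qx.
move/existsPn => Nq.
have Nq' : forall q, dedge t x q -> q \in S.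
  by move=> q exq; have := Nq q; rewrite exq /= negbK.
exists (S :\ x); last by apply: leqW; apply: subset_leq_card; apply: subsetDl.
apply: (@feasible_intro _ _ (X :\ x)).
- exact: (subset_trans (subsetDl _ _) SV).
- move=> u uV uT; rewrite !inE negb_and negbK => /orP[/eqP ux|uS].
    by move: uT; rewrite ux xT.
  have [w wS ew] := D u uV uT uS; exists w => //.
  rewrite !inE wS andbT; apply/eqP => wx; rewrite wx in ew.
  by move: uS; rewrite Nq'.
- by apply: setSD.
- by apply: subset_trans (subsetDl _ _) _.
- done.
- have -> : (S :\ x) :\: (X :\ x) = S :\: X.
    apply/setP=> y; rewrite !inE; case: (eqVneq y x) => [->|] //=.
    by rewrite xX.
  done.
Qed.

Lemma feas_exists : uniq (dleaves t) -> exists S, feasible t 0 S.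
Proof.
move=> U.
pose P := fun S : {set V} => (S \subset dV t) && perfect_matching (dedge t) S.
have P0 : P set0 by rewrite /P sub0set pm_set0.
case: (@arg_maxnP _ set0 P (fun S => #|S|) P0) => S /andP[SV pmS] maxS.
exists S; apply: (@feasible_intro _ _ set0) => //.
- move=> u uV uT uS.
  case: (boolP [exists w in S, dedge t w u]) => [/exists_inP //|/exists_inP Nw].
  have [w euw] := nonisol uV uT.
  have wS : w \notin S by apply/negP=> wS; apply: Nw; exists w; rewrite // dedge_sym.
  have uw : u != w by apply/eqP=> E; rewrite E dedge_irr in euw.
  have wV : w \in dV t by case/andP: (dedge_in euw).
  have := maxS (S :|: [set u; w]).
  rewrite /P subUset SV subUset !sub1set uV wV pm_add //=.
  have : #|u |: S| <= #|S :|: [set u; w]|.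
    by apply: subset_leq_card; rewrite subUset subsetUl !sub1set !inE eqxx !orbT.
  rewrite cardsU1 uS add1n => H1 H2; have := leq_trans H1 (H2 isT); by rewrite ltnn.
- exact: sub0set.
- exact: sub0set.
- by rewrite cards0.
- by rewrite setD0.
Qed.
End Feas.

Lemma bigmin_le (I : finType) (P : pred I) (F : I -> nat) d i :
  P i -> \big[minn/d]_(j | P j) F j <= F i.
Proof.
move=> Pi; have : i \in index_enum I by rewrite mem_index_enum.
elim: (index_enum I) => // x r IH; rewrite inE big_cons.
case/orP=> [/eqP <-|ir]; first by rewrite Pi geq_minl.
by case: (P x); rewrite ?geq_min IH ?orbT.
Qed.

Lemma bigmin_ub (I : finType) (P : pred I) (F : I -> nat) d :
  \big[minn/d]_(j | P j) F j <= d.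
Proof.
elim: (index_enum I) => [|x r IH]; first by rewrite big_nil.
by rewrite big_cons; case: (P x); rewrite ?geq_min IH ?orbT.
Qed.

Lemma bigmin_cases (I : finType) (P : pred I) (F : I -> nat) d :
  \big[minn/d]_(j | P j) F j = d \/ exists2 i, P i & \big[minn/d]_(j | P j) F j = F i.
Proof.
apply: (big_ind (fun z => z = d \/ exists2 i, P i & z = F i)); first by left.
  by move=> x y Hx Hy; rewrite /minn; case: ifP.
by move=> i Pi; right; exists i.
Qed.

Lemma bigmax_cases (I : finType) (P : pred I) (F : I -> nat) :
  \max_(j | P j) F j = 0 \/ exists2 i, P i & \max_(j | P j) F j = F i.
Proof.
apply: (big_ind (fun z => z = 0 \/ exists2 i, P i & z = F i)); first by left.
  by move=> x y Hx Hy; rewrite /maxn; case: ifP.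
by move=> i Pi; right; exists i.
Qed.

Section G.
Variable V : finType.
Variable t : dtree V.

Lemma gamma_le k S : feasible t k S -> gamma t k <= #|S|.
Proof. exact: bigmin_le. Qed.

Lemma gamma_ub k : gamma t k <= #|V|.+1.
Proof. exact: bigmin_ub. Qed.

Lemma gamma_cases k : gamma t k = #|V|.+1 \/ exists2 S, feasible t k S & gamma t k = #|S|.
Proof. exact: bigmin_cases. Qed.

Lemma gamma_up k : k < #|dTS t| -> gamma t k.+1 <= (gamma t k).+1.
Proof.
move=> klt; case: (gamma_cases k) => [->|[S fS ->]].
  exact: leq_trans (gamma_ub _) (leqnSn _).
have [S' fS' le] := feas_up fS klt.
exact: leq_trans (gamma_le fS') le.
Qed.

Lemma gamma_down k : gamma t k <= (gamma t k.+1).+1.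
Proof.
case: (gamma_cases k.+1) => [->|[S fS ->]].
  exact: leq_trans (gamma_ub _) (leqnSn _).
have [S' fS' le] := feas_down fS.
exact: leq_trans (gamma_le fS') le.
Qed.

Lemma gamma_par k : gamma t k <= #|V| -> odd (gamma t k) = odd k.
Proof.
case: (gamma_cases k) => [->|[S fS ->]]; first by move=> H; rewrite ltnn in H.
move=> _; exact: (feas_par fS).
Qed.

Lemma gamma0_fin : uniq (dleaves t) -> gamma t 0 <= #|V|.
Proof.
move=> U; have [S fS] := feas_exists U.
exact: leq_trans (gamma_le fS) (max_card _).
Qed.

Lemma gmin_le k : k <= #|dTS t| -> gmin t <= gamma t k.
Proof.
move=> kle; have := @bigmin_le _ xpredT (fun i : 'I_(#|dTS t|.+1) => gamma t i) #|V|.+1 (Ordinal (kle : k < #|dTS t|.+1)) isT.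
done.
Qed.

Lemma gmin_att : exists2 j, j <= #|dTS t| & gamma t j = gmin t.
Proof.
case: (@bigmin_cases _ xpredT (fun i : 'I_(#|dTS t|.+1) => gamma t i) #|V|.+1) => [E|[i _ E]].
  exists 0 => //; apply/eqP; rewrite eqn_leq gmin_le // andbT.
  rewrite /gmin E; exact: gamma_ub.
by exists i; [rewrite -ltnS ltn_ord | rewrite /gmin E].
Qed.

Lemma galpha_spec : galpha t <= #|dTS t| /\ gamma t (galpha t) = gmin t.
Proof.
have [j jle gj] := gmin_att.
have le : galpha t <= j.
  have := @bigmin_le _ (fun i : 'I_(#|dTS t|.+1) => gamma t i == gmin t) (fun i => i : nat) #|dTS t|.+1 (Ordinal (jle : j < #|dTS t|.+1)).
  by rewrite /= gj eqxx => /(_ isT).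
case: (@bigmin_cases _ (fun i : 'I_(#|dTS t|.+1) => gamma t i == gmin t) (fun i => i : nat) #|dTS t|.+1) => [E|[i /eqP gi E]].
  by move: le; rewrite /galpha E => le; have := leq_trans le jle; rewrite ltnn.
by rewrite /galpha E gi; split => //; rewrite -ltnS ltn_ord.
Qed.

Lemma gbeta_spec : gbeta t <= #|dTS t| /\ gamma t (gbeta t) = gmin t.
Proof.
have [j jle gj] := gmin_att.
have le : j <= gbeta t.
  have := @leq_bigmax_cond _ (fun i : 'I_(#|dTS t|.+1) => gamma t i == gmin t) (fun i => i : nat) (Ordinal (jle : j < #|dTS t|.+1)).
  by rewrite /= gj eqxx => /(_ isT).
case: (@bigmax_cases _ (fun i : 'I_(#|dTS t|.+1) => gamma t i == gmin t) (fun i => i : nat)) => [E|[i /eqP gi E]].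
  move: le; rewrite /gbeta E leqn0 => /eqP j0; rewrite -j0 gj; split => //.
by rewrite /gbeta E gi; split => //; rewrite -ltnS ltn_ord.
Qed.
End G.
Unset Implicit Arguments. Set Strict Implicit.

Lemma lip (f : nat -> nat) n : (forall k, k < n -> f k.+1 <= (f k).+1) ->
  (forall k, f k <= (f k.+1).+1) ->
  forall i d, i + d <= n -> f (i + d) <= f i + d /\ f i <= f (i + d) + d.
Proof.
move=> Hu Hd i; elim=> [|d IH] le; first by rewrite !addn0.
have le' : i + d <= n by lia.
have [IH1 IH2] := IH le'.
have S1 := Hu (i + d) (ltac:(lia)).
have S2 := Hd (i + d).
rewrite addnS; split; lia.
Qed.

Theorem corollary1 (V : finType) (g : rel V) (T v : dtree V) :
  simple_graph g -> distance_hereditary g -> decomposition_tree g T ->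
  subtree v T -> is_internal v ->
  gamma v 0 = gmin v + galpha v ->
  gamma v #|dTS v| = gmin v + (#|dTS v| - gbeta v) ->
  (forall i, i <= (gbeta v - galpha v)./2 -> gamma v (galpha v + 2 * i) = gmin v) ->
  forall k, k <= #|dTS v| ->
    [/\ k <= galpha v -> gamma v k = gmin v + (galpha v - k),
        gbeta v <= k -> gamma v k = gmin v + (k - gbeta v),
        galpha v < k < gbeta v -> ~~ odd (k - galpha v) -> gamma v k = gmin v &
        ~~ (k <= galpha v) -> ~~ (gbeta v <= k) ->
          ~~ ((galpha v < k < gbeta v) && ~~ odd (k - galpha v)) ->
          gamma v k = (gmin v).+1].
Proof.
move=> _ _ [UT _ _] sub _ H0 Hn H3 k kle.
have U := subtree_uniq sub UT.
have Hup := @gamma_up V v.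
have Hdn := @gamma_down V v.
have [ale ga] := galpha_spec v.
have [ble gb] := gbeta_spec v.
have Hm := @gmin_le V v.
have F0 := gamma0_fin U.
have L := @lip (gamma v) #|dTS v| Hup Hdn.
have Hm0 := Hm 0 (leq0n _).
split.
- move=> ka.
  have [_ L1] := L k (galpha v - k) ltac:(lia).
  have [_ L2] := L 0 k kle.
  rewrite subnKC // in L1; rewrite add0n in L2; lia.
- move=> bk.
  have [L1 _] := L (gbeta v) (k - gbeta v) ltac:(lia).
  have [L2 _] := L k (#|dTS v| - k) ltac:(lia).
  rewrite subnKC // in L1; rewrite subnKC // in L2; lia.
- move=> /andP[ak kb] ev.
  have E := odd_double_half (k - galpha v); rewrite (negbTE ev) add0n -muln2 in E.
  have Hi : (k - galpha v)./2 <= (gbeta v - galpha v)./2 by apply: half_leq; lia.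
  have := H3 _ Hi; move: E; move: ((k - galpha v)./2) => i E.
  have -> : galpha v + 2 * i = k by lia.
  done.
move=> /negP nka /negP nbk nc.
have ak : galpha v < k by rewrite ltnNge; apply/negP.
have kb : k < gbeta v by rewrite ltnNge; apply/negP.
have od : odd (k - galpha v) by move: nc; rewrite ak kb /= negbK.
have Ek : k - galpha v = (k.-1 - galpha v).+1 by lia.
have ev : ~~ odd (k.-1 - galpha v) by move: od; rewrite Ek /=.
have E := odd_double_half (k.-1 - galpha v); rewrite (negbTE ev) add0n -muln2 in E.
have Hi : (k.-1 - galpha v)./2 <= (gbeta v - galpha v)./2 by apply: half_leq; lia.
have G1 := H3 _ Hi; move: E G1; move: ((k.-1 - galpha v)./2) => i E G1.
have Ek1 : galpha v + 2 * i = k.-1 by lia.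
rewrite Ek1 in G1.
have G2 := Hup k.-1 ltac:(lia).
have kS : k.-1.+1 = k by lia.
rewrite kS G1 in G2.
have G3 := Hm k kle.
have ne : gamma v k != gmin v.
  apply/eqP=> E1.
  have P1 := gamma_par (t := v) (k := k) ltac:(lia).
  have P2 := gamma_par (t := v) (k := galpha v) ltac:(lia).
  move: od; rewrite oddB ?(ltnW ak) // -P1 -P2 E1 ga.
  by rewrite addbb.
lia.
Qed.
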